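(* There is an absolute constant $C>0$ such that the following holds. Let $U^*,S,p_{ijk},\widehat p_{ijk},\mathcal{W}_{ijk},\delta_{ijk}$ be as in the context, and let $U\in\mathbb{R}^{n\times r}$ be a fixed (non-random, or independent of $\delta$) matrix with unit-norm columns satisfying $|U_{il}|\le2\|(U^* )^i\|$ for all $i,l$. Let $\gamma\in(0,1]$, $i\in[n]$ and $q\in[r]$ be fixed. If $m\ge\frac{C}{\gamma^2}n\log(n)S^2$, then with probability at least $1-n^{-10}$, $$\Big|\sum_{j,k}\delta_{ijk}\mathcal{W}_{ijk}U_{jq}U^*_{jq}U_{kq}U^*_{kq}-\langle U_q,U^*_q\rangle^2\Big|\le\gamma .$$
   Context: $U^*\in\mathbb{R}^{n\times r}$ has orthonormal columns $U^*_l$ and rows $(U^* )^i$; $S=\sum_i\|(U^* )^i\|^{3/2}$; $p_{ijk}=\frac{\|(U^* )^i\|^{3/2}\|(U^* )^j\|^{3/2}+\|(U^* )^j\|^{3/2}\|(U^* )^k\|^{3/2}+\|(U^* )^k\|^{3/2}\|(U^* )^i\|^{3/2}}{3nS^2}$; $\widehat p_{ijk}=\min\{mp_{ijk},1\}$; $\mathcal{W}_{ijk}=1/\widehat p_{ijk}$ if $\widehat p_{ijk}>0$, else $0$; $\delta_{ijk}$ are independent Bernoulli$(\widehat p_{ijk})$ random variables. *)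

(* Defs.v *)
From Stdlib Require Import Reals ClassicalEpsilon.
From mathcomp Require Import all_boot.
Set Implicit Arguments. Unset Strict Implicit. Unset Printing Implicit Defensive.

Local Open Scope R_scope.

Definition rsum (T : finType) (F : T -> R) : R := \big[Rplus/0]_(x : T) F x.
Definition rprod (T : finType) (F : T -> R) : R := \big[Rmult/1]_(x : T) F x.

Definition mat (n r : nat) := 'I_n -> 'I_r -> R.

Definition orthonormal_cols n r (A : mat n r) : Prop :=
  forall l l' : 'I_r, rsum (fun i => A i l * A i l') = (if l == l' then 1 else 0).

Definition unit_norm_cols n r (A : mat n r) : Prop :=
  forall l : 'I_r, rsum (fun i => (A i l) ^ 2) = 1.

Definition rownorm n r (A : mat n r) (i : 'I_n) : R := sqrt (rsum (fun l => (A i l) ^ 2)).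

Definition pow32 (x : R) : R := x * sqrt x.

Definition Sval n r (Us : mat n r) : R := rsum (fun i => pow32 (rownorm Us i)).

Definition triple n := ('I_n * 'I_n * 'I_n)%type.

Definition pval n r (Us : mat n r) (t : triple n) : R :=
  let '(i, j, k) := t in
  let a := pow32 (rownorm Us i) in
  let b := pow32 (rownorm Us j) in
  let c := pow32 (rownorm Us k) in
  (a * b + b * c + c * a) / (3 * INR n * (Sval Us) ^ 2).

Definition phat n r (Us : mat n r) (m : R) (t : triple n) : R :=
  Rmin (m * pval Us t) 1.

Definition Wt n r (Us : mat n r) (m : R) (t : triple n) : R :=
  if Rlt_dec 0 (phat Us m t) then / phat Us m t else 0.

(* Outcome space of (delta_{ijk}): all boolean functions on triples.
   Independent Bernoulli(phat) law: product weights. *)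
Definition outcome n := {ffun triple n -> bool}.

Definition bern_weight n r (Us : mat n r) (m : R) (d : outcome n) : R :=
  rprod (fun t : triple n => if d t then phat Us m t else 1 - phat Us m t).

Definition Prob n r (Us : mat n r) (m : R) (E : outcome n -> Prop) : R :=
  rsum (fun d : outcome n =>
          if excluded_middle_informative (E d) then bern_weight Us m d else 0).

Definition b2R (b : bool) : R := if b then 1 else 0.

Definition rand_sum n r (Us U : mat n r) (m : R) (i : 'I_n) (q : 'I_r) (d : outcome n) : R :=
  rsum (fun j : 'I_n => rsum (fun k : 'I_n =>
    b2R (d (i, j, k)) * Wt Us m (i, j, k) * U j q * Us j q * U k q * Us k q)).

Definition col_inner n r (U Us : mat n r) (q : 'I_r) : R := rsum (fun j => U j q * Us j q).

(* Main.v *)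
Require Import Defs.
From Stdlib Require Import Reals ClassicalEpsilon Lra.
From HB Require Import structures.
From mathcomp Require Import all_boot.
Set Implicit Arguments. Unset Strict Implicit.
Local Open Scope R_scope.

Lemma Rplus_assoc' : associative Rplus. Proof. by move=> *; rewrite Rplus_assoc. Qed.
Lemma Rmult_assoc' : associative Rmult. Proof. by move=> *; rewrite Rmult_assoc. Qed.
HB.instance Definition _ := Monoid.isComLaw.Build R 0 Rplus Rplus_assoc' Rplus_comm Rplus_0_l.
HB.instance Definition _ := Monoid.isComLaw.Build R 1 Rmult Rmult_assoc' Rmult_comm Rmult_1_l.
HB.instance Definition _ := Monoid.isMulLaw.Build R 0 Rmult Rmult_0_l Rmult_0_r.
HB.instance Definition _ := Monoid.isAddLaw.Build R Rmult Rplus Rmult_plus_distr_r Rmult_plus_distr_l.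

Lemma prod_sum_identity (T : finType) (ph : T -> R) (g : T -> bool -> R) :
  rsum (fun d : {ffun T -> bool} =>
     rprod (fun t => if d t then ph t else 1 - ph t) * rprod (fun t => g t (d t)))
  = rprod (fun t => ph t * g t true + (1 - ph t) * g t false).
Proof.
rewrite /rsum /rprod.
have -> : \big[Rmult/1]_(t : T) (ph t * g t true + (1 - ph t) * g t false)
   = \big[Rmult/1]_(t : T) \big[Rplus/0]_(b : bool) ((if b then ph t else 1 - ph t) * g t b).
  by apply: eq_bigr => t _; rewrite big_bool /= Rplus_comm.
rewrite bigA_distr_bigA; apply: eq_bigr => d _.
by rewrite -big_split /=.
Qed.

Lemma rsum_le (T : finType) (F G : T -> R) : (forall x, F x <= G x) -> rsum F <= rsum G.
Proof.
move=> H; rewrite /rsum; apply: (big_ind2 (fun a b => a <= b)) => //.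
- exact: Rle_refl.
- by move=> *; apply: Rplus_le_compat.
Qed.

Lemma rsum0 (T : finType) : rsum (fun _ : T => 0) = 0.
Proof. by rewrite /rsum big1. Qed.

Lemma rsum_ge0 (T : finType) (F : T -> R) : (forall x, 0 <= F x) -> 0 <= rsum F.
Proof. by move=> H; rewrite -(rsum0 T); apply: rsum_le. Qed.

Lemma rsum_ext (T : finType) (F G : T -> R) : (forall x, F x = G x) -> rsum F = rsum G.
Proof. by move=> H; apply: eq_bigr => x _. Qed.

Lemma rsum_plus (T : finType) (F G : T -> R) : rsum (fun x => F x + G x) = rsum F + rsum G.
Proof. by rewrite /rsum big_split. Qed.

Lemma rsum_scal (T : finType) (a : R) (F : T -> R) : rsum (fun x => a * F x) = a * rsum F.
Proof. by rewrite /rsum big_distrr. Qed.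

Lemma rsum_scar (T : finType) (a : R) (F : T -> R) : rsum (fun x => F x * a) = rsum F * a.
Proof. by rewrite /rsum big_distrl. Qed.

Lemma rprod_le (T : finType) (F G : T -> R) : (forall x, 0 <= F x <= G x) -> 0 <= rprod F <= rprod G.
Proof.
move=> H; rewrite /rprod; apply: (big_ind2 (fun a b => 0 <= a <= b)) => //.
- lra.
- move=> a b c d [h1 h2] [h3 h4]; split; first by apply: Rmult_le_pos.
  by apply: Rmult_le_compat.
Qed.

Lemma rprod1 (T : finType) : rprod (fun _ : T => 1) = 1.
Proof. by rewrite /rprod big1. Qed.

Lemma exp_rsum (T : finType) (F : T -> R) : exp (rsum F) = rprod (fun x => exp (F x)).
Proof. by rewrite /rsum /rprod (big_morph exp exp_plus exp_0). Qed.

Lemma rsum_triple n (F : triple n -> R) :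
  rsum F = rsum (fun i => rsum (fun j => rsum (fun k => F (i, j, k)))).
Proof.
rewrite /rsum.
transitivity (\big[Rplus/0]_(ij : 'I_n * 'I_n) \big[Rplus/0]_(k : 'I_n) F (ij, k)).
  rewrite (pair_bigA _ (fun ij k => F (ij, k))).
  apply: (@eq_bigr R 0 Rplus (('I_n * 'I_n) * 'I_n)%type) => [[ij k]] _ //.
rewrite (pair_bigA _ (fun i j => \big[Rplus/0]_(k : 'I_n) F (i, j, k))).
by apply: (@eq_bigr R 0 Rplus ('I_n * 'I_n)%type) => [[i j]] _.
Qed.

Lemma exp_quad (y : R) : y <= 1/2 -> exp y <= 1 + y + 2 * y ^ 2.
Proof.
move=> hy.
have h1 := exp_ineq1_le (- y).
have hpos : 0 < 1 - y by lra.
have he : exp y * exp (- y) = 1 by rewrite -exp_plus Rplus_opp_r exp_0.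
have hey := exp_pos y.
have h2 : exp y * (1 - y) <= 1.
  rewrite -he; apply: Rmult_le_compat_l; lra.
have h3 : 1 <= (1 - y) * (1 + y + 2 * y ^ 2).
  have : 0 <= y ^ 2 * (1 - 2 * y) by apply: Rmult_le_pos; [nra | lra].
  nra.
nra.
Qed.

Lemma factor_bound (p c lam : R) :
  0 < p <= 1 -> Rabs (lam * c) <= p / 2 ->
  p * exp (lam * (1 * / p * c - c)) + (1 - p) * exp (lam * (0 * / p * c - c))
  <= exp (2 * lam ^ 2 * c ^ 2 / p).
Proof.
move=> [hp0 hp1] hb.
set u := lam * c.
have e1 : lam * (1 * / p * c - c) = u * (1 - p) / p by rewrite /u; field; lra.
have e0 : lam * (0 * / p * c - c) = - u by rewrite /u; ring.
rewrite e1 e0.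
have hu : Rabs u <= p / 2 := hb.
have hu1 : - (p/2) <= u <= p / 2 by move: hu; rewrite /Rabs; case: Rcase_abs => ? ?; lra.
have hy1 : u * (1 - p) / p <= 1/2.
  have : u * (1 - p) <= (p/2) * (1 - p) by apply: Rmult_le_compat_r; lra.
  move=> h; apply/(Rmult_le_reg_r p) => //.
  have -> : u * (1 - p) / p * p = u * (1 - p) by field; lra.
  nra.
have hy0 : - u <= 1/2 by lra.
have E1 := exp_quad hy1.
have E0 := exp_quad hy0.
have lam2 : 2 * lam ^ 2 * c ^ 2 / p = 2 * u ^ 2 / p by rewrite /u; field; lra.
rewrite lam2.
apply: (Rle_trans _ (1 + 2 * u ^ 2 / p)); last first.
  by have := exp_ineq1_le (2 * u ^ 2 / p); lra.
apply: (Rle_trans _ (p * (1 + u * (1 - p) / p + 2 * (u * (1 - p) / p) ^ 2)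
                    + (1 - p) * (1 + - u + 2 * (- u) ^ 2))).
  apply: Rplus_le_compat; [apply: Rmult_le_compat_l|apply: Rmult_le_compat_l]; lra.
have -> : p * (1 + u * (1 - p) / p + 2 * (u * (1 - p) / p) ^ 2)
  + (1 - p) * (1 + - u + 2 * (- u) ^ 2) = 1 + 2 * u ^ 2 / p * (1 - p) by field; lra.
have : 0 <= 2 * u ^ 2 / p.
  apply: Rmult_le_pos; [nra | by apply: Rlt_le; apply: Rinv_0_lt_compat].
nra.
Qed.

Definition wgt (T : finType) (ph : T -> R) (d : {ffun T -> bool}) : R :=
  rprod (fun t => if d t then ph t else 1 - ph t).

Lemma wgt_ge0 (T : finType) (ph : T -> R) d : (forall t, 0 <= ph t <= 1) -> 0 <= wgt ph d.
Proof.
move=> H; apply: (proj1 (@rprod_le T (fun t => if d t then ph t else 1 - ph t)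
                        (fun t => if d t then ph t else 1 - ph t) _)).
by move=> t; case: (d t); have := H t; lra.
Qed.

Lemma wgt_sum (T : finType) (ph : T -> R) : rsum (fun d : {ffun T -> bool} => wgt ph d) = 1.
Proof.
have := prod_sum_identity ph (fun _ _ => 1).
rewrite (rsum_ext (G := fun d => wgt ph d)); last by move=> d; rewrite rprod1 Rmult_1_r.
move=> ->; rewrite -[RHS](rprod1 T); apply: eq_bigr => t _; ring.
Qed.

Lemma mgf_bound (T : finType) (ph : T -> R) (Y : T -> bool -> R) (s : R) (v : T -> R) :
  (forall t, 0 <= ph t <= 1) ->
  (forall t, ph t * exp (s * Y t true) + (1 - ph t) * exp (s * Y t false) <= exp (v t)) ->
  rsum (fun d : {ffun T -> bool} => wgt ph d * exp (s * rsum (fun t => Y t (d t))))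
  <= exp (rsum v).
Proof.
move=> Hp Hb.
rewrite (rsum_ext (G := fun d : {ffun T -> bool} =>
   wgt ph d * rprod (fun t => exp (s * Y t (d t))))); last first.
  by move=> d; rewrite -rsum_scal exp_rsum.
rewrite /wgt (prod_sum_identity ph (fun t b => exp (s * Y t b))) exp_rsum.
apply: (proj2 (@rprod_le T (fun t => ph t * exp (s * Y t true) + (1 - ph t) * exp (s * Y t false))
           (fun t => exp (v t)) _)).
move=> t; split; last exact: Hb.
have := Hp t; have := exp_pos (s * Y t true); have := exp_pos (s * Y t false).
move=> *; apply: Rplus_le_le_0_compat; apply: Rmult_le_pos; lra.
Qed.

Lemma tail_bound (T : finType) (ph : T -> R) (Y : T -> bool -> R) (lam g : R) (v : T -> R) :
  0 < lam ->
  (forall t, 0 <= ph t <= 1) ->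
  (forall t, ph t * exp (lam * Y t true) + (1 - ph t) * exp (lam * Y t false) <= exp (v t)) ->
  (forall t, ph t * exp (- lam * Y t true) + (1 - ph t) * exp (- lam * Y t false) <= exp (v t)) ->
  rsum (fun d : {ffun T -> bool} =>
    if excluded_middle_informative (Rabs (rsum (fun t => Y t (d t))) <= g) then 0 else wgt ph d)
  <= 2 * exp (- lam * g + rsum v).
Proof.
move=> hl Hp H1 H2.
apply: (Rle_trans _ (rsum (fun d : {ffun T -> bool} =>
   exp (- lam * g) * (wgt ph d * exp (lam * rsum (fun t => Y t (d t)))) +
   exp (- lam * g) * (wgt ph d * exp (- lam * rsum (fun t => Y t (d t))))))).
  apply: rsum_le => d.
  set X := rsum _.
  have hw := wgt_ge0 d Hp.
  have e1 := exp_pos (- lam * g); have e2 := exp_pos (lam * X); have e3 := exp_pos (- lam * X).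
  case: excluded_middle_informative => hE.
    by apply: Rplus_le_le_0_compat; apply: Rmult_le_pos; try apply: Rmult_le_pos; lra.
  rewrite -!Rmult_assoc (Rmult_comm (exp (- lam * g))) !Rmult_assoc -!exp_plus.
  have : g < X \/ g < - X by move: hE; rewrite /Rabs; case: Rcase_abs => ? ?; lra.
  set w := wgt ph d.
  set A := exp (- lam * g + lam * X).
  set B := exp (- lam * g + - lam * X).
  have hA : 0 <= A by apply: Rlt_le; apply: exp_pos.
  have hB : 0 <= B by apply: Rlt_le; apply: exp_pos.
  case=> hX.
  - have h1 := exp_ineq1_le (- lam * g + lam * X).
    have : 0 < lam * (X - g) by apply: Rmult_lt_0_compat; lra.
    move=> h2; have h3 : 1 <= A.
      have : - lam * g + lam * X = lam * (X - g) by ring. rewrite /A; lra.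
    have := Rmult_le_pos w (A - 1) hw ltac:(lra).
    have := Rmult_le_pos w B hw hB.
    have : w * (A - 1) = w * A - w by ring. simpl; lra.
  - have h1 := exp_ineq1_le (- lam * g + - lam * X).
    have : 0 < lam * (- X - g) by apply: Rmult_lt_0_compat; lra.
    move=> h2; have h3 : 1 <= B.
      have : - lam * g + - lam * X = lam * (- X - g) by ring. rewrite /B; lra.
    have := Rmult_le_pos w (B - 1) hw ltac:(lra).
    have := Rmult_le_pos w A hw hA.
    have : w * (B - 1) = w * B - w by ring. simpl; lra.
rewrite rsum_plus !rsum_scal.
have M1 := mgf_bound Hp H1.
have M2 := mgf_bound Hp H2.
have e1 := exp_pos (- lam * g).
rewrite exp_plus.
apply: (Rle_trans _ (exp (- lam * g) * exp (rsum v) + exp (- lam * g) * exp (rsum v))); last lra.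
apply: Rplus_le_compat; apply: Rmult_le_compat_l; try lra.
  exact: M1.
exact: M2.
Qed.

Lemma exp_le (x y : R) : x <= y -> exp x <= exp y.
Proof. move=> h; case: (Rle_lt_or_eq_dec _ _ h) => h'; [apply: Rlt_le; exact: exp_increasing | rewrite h'; lra]. Qed.

Lemma rsum_term_le (T : finType) (F : T -> R) j : (forall x, 0 <= F x) -> F j <= rsum F.
Proof.
move=> H; rewrite /rsum (bigD1 j) //=.
have : 0 <= \big[Rplus/0]_(i | i != j) F i.
  apply: (big_ind (fun a => 0 <= a)); [lra | move=> *; lra | move=> *; exact: H].
lra.
Qed.

Lemma rsum_minus (T : finType) (F G : T -> R) : rsum (fun x => F x - G x) = rsum F - rsum G.
Proof.
rewrite (rsum_ext (G := fun x => F x + (-1) * G x)); last by move=> x; ring.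
by rewrite rsum_plus rsum_scal; ring.
Qed.

Lemma rsum_delta (T : finType) (F : T -> R) i :
  rsum (fun x => if x == i then F x else 0) = F i.
Proof.
rewrite /rsum (bigD1 i) //= eqxx big1 ?Rplus_0_r // => x /negbTE ->; by [].
Qed.

Lemma abs_le_1_col n r (A : mat n r) j l : rsum (fun i => A i l ^ 2) = 1 -> Rabs (A j l) <= 1.
Proof.
move=> H.
have h : A j l ^ 2 <= 1 by rewrite -H; apply: (rsum_term_le (F := fun i => A i l ^ 2)) => x; nra.
have := pow2_abs (A j l); have := Rabs_pos (A j l); nra.
Qed.

Lemma rownorm_ge0 n r (A : mat n r) j : 0 <= rownorm A j.
Proof. exact: sqrt_pos. Qed.

Lemma abs_le_rownorm n r (A : mat n r) j l : Rabs (A j l) <= rownorm A j.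
Proof.
rewrite /rownorm -sqrt_Rsqr_abs; apply: sqrt_le_1_alt.
rewrite /Rsqr; have -> : A j l * A j l = A j l ^ 2 by ring.
apply: (rsum_term_le (F := fun l => A j l ^ 2)) => x; nra.
Qed.

Lemma pow32_ge0 x : 0 <= x -> 0 <= pow32 x.
Proof. move=> h; rewrite /pow32; apply: Rmult_le_pos => //; exact: sqrt_pos. Qed.

Lemma prod_bound n r (Us U : mat n r) j q :
  orthonormal_cols Us -> unit_norm_cols U ->
  (forall (i' : 'I_n) (l : 'I_r), Rabs (U i' l) <= 2 * rownorm Us i') ->
  Rabs (U j q * Us j q) <= 2 * pow32 (rownorm Us j).
Proof.
move=> HUs HU Hb.
have h1 : Rabs (Us j q) <= 1.
  apply: abs_le_1_col; have := HUs q q; rewrite eqxx => <-; apply: rsum_ext => x /=; ring.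
have h2 := abs_le_rownorm Us j q.
set x := rownorm Us j in h2 *.
have hx : 0 <= x by exact: rownorm_ge0.
have h3 : Rabs (Us j q) <= sqrt x.
  rewrite -(sqrt_pow2 (Rabs (Us j q))); last exact: Rabs_pos.
  apply: sqrt_le_1_alt; have := Rabs_pos (Us j q); nra.
rewrite Rabs_mult /pow32.
have := Hb j q; have := Rabs_pos (U j q); have := Rabs_pos (Us j q); have := sqrt_pos x.
rewrite -/x => *.
have := Rmult_le_compat _ _ _ _ (Rabs_pos (U j q)) (Rabs_pos (Us j q)) (Hb j q) h3.
rewrite -/x; lra.
Qed.

Lemma Sval_pos n r (Us : mat n r) (q : 'I_r) : orthonormal_cols Us -> 0 < Sval Us.
Proof.
move=> HUs.
have hs : 0 <= Sval Us by apply: rsum_ge0 => j; apply: pow32_ge0; exact: rownorm_ge0.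
case: (Rle_lt_or_eq_dec _ _ hs) => // h0; exfalso.
have hq := HUs q q; rewrite eqxx in hq.
have hz : forall j, Us j q = 0.
  move=> j.
  have ha : pow32 (rownorm Us j) <= Sval Us.
    by apply: (rsum_term_le (F := fun i => pow32 (rownorm Us i))) => x; apply: pow32_ge0; exact: rownorm_ge0.
  have ha0 := pow32_ge0 (rownorm_ge0 Us j).
  have hx0 : pow32 (rownorm Us j) = 0 by lra.
  have hx : rownorm Us j = 0.
    move: hx0; rewrite /pow32 => /Rmult_integral [] // /sqrt_eq_0; apply; exact: rownorm_ge0.
  have := abs_le_rownorm Us j q; rewrite hx => h.
  have := Rabs_pos (Us j q) => h'.
  by move: h h'; rewrite /Rabs; case: Rcase_abs => ? ? ?; lra.
have : rsum (fun i => Us i q * Us i q) = 0.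
  by rewrite (rsum_ext (G := fun _ => 0)) ?rsum0 // => j; rewrite hz; ring.
lra.
Qed.

Definition cc n r (Us U : mat n r) (q : 'I_r) (j k : 'I_n) : R :=
  U j q * Us j q * (U k q * Us k q).

Lemma c_bound n r (Us U : mat n r) (m : R) (q : 'I_r) (i j k : 'I_n) :
  orthonormal_cols Us -> unit_norm_cols U ->
  (forall (i' : 'I_n) (l : 'I_r), Rabs (U i' l) <= 2 * rownorm Us i') ->
  0 < m -> 0 < INR n ->
  Rabs (cc Us U q j k) <= 12 * (INR n * Sval Us ^ 2 / m) * (m * pval Us (i, j, k)).
Proof.
move=> HUs HU Hb hm hn.
have hS := Sval_pos q HUs.
rewrite /pval.
set ai := pow32 (rownorm Us i); set aj := pow32 (rownorm Us j); set ak := pow32 (rownorm Us k).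
have hi : 0 <= ai by apply: pow32_ge0; exact: rownorm_ge0.
have hj : 0 <= aj by apply: pow32_ge0; exact: rownorm_ge0.
have hk : 0 <= ak by apply: pow32_ge0; exact: rownorm_ge0.
have -> : 12 * (INR n * Sval Us ^ 2 / m) *
   (m * ((ai * aj + aj * ak + ak * ai) / (3 * INR n * Sval Us ^ 2)))
   = 4 * (ai * aj + aj * ak + ak * ai).
  field; split; [|split]; lra.
have h1 := prod_bound j q HUs HU Hb.
have h2 := prod_bound k q HUs HU Hb.
rewrite /cc Rabs_mult.
have := Rmult_le_compat _ _ _ _ (Rabs_pos _) (Rabs_pos _) h1 h2.
rewrite -/aj -/ak.
have := Rmult_le_pos _ _ hi hj; have := Rmult_le_pos _ _ hk hi.
nra.
Qed.

Lemma pval_ge0 n r (Us : mat n r) (t : triple n) : 0 <= pval Us t.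
Proof.
case: t => [[i j] k]; rewrite /pval.
have hi := pow32_ge0 (rownorm_ge0 Us i).
have hj := pow32_ge0 (rownorm_ge0 Us j).
have hk := pow32_ge0 (rownorm_ge0 Us k).
apply: Rmult_le_pos; first by have := Rmult_le_pos _ _ hi hj; have := Rmult_le_pos _ _ hj hk; have := Rmult_le_pos _ _ hk hi; lra.
have hD : 0 <= 3 * INR n * Sval Us ^ 2.
  apply: Rmult_le_pos; [have := pos_INR n; lra | apply: pow2_ge_0].
case: (Rle_lt_or_eq_dec _ _ hD) => h.
  by apply: Rlt_le; apply: Rinv_0_lt_compat.
by rewrite -h Rinv_0; lra.
Qed.

Lemma phat_bounds n r (Us : mat n r) m t : 0 <= m -> 0 <= phat Us m t <= 1.
Proof.
move=> hm; rewrite /phat; split; last exact: Rmin_r.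
apply: Rmin_glb; [apply: Rmult_le_pos => //; exact: pval_ge0 | lra].
Qed.

Definition Yf n r (Us U : mat n r) (m : R) (i : 'I_n) (q : 'I_r) (t : triple n) (b : bool) : R :=
  let '(i', j, k) := t in
  if i' == i then b2R b * Wt Us m t * cc Us U q j k - cc Us U q j k else 0.

Definition vf n r (Us U : mat n r) (m lam : R) (i : 'I_n) (q : 'I_r) (t : triple n) : R :=
  let '(i', j, k) := t in
  if i' == i then 2 * lam ^ 2 * (12 * (INR n * Sval Us ^ 2 / m)) * Rabs (cc Us U q j k) else 0.

Lemma factor_Y n r (Us U : mat n r) (m lam s : R) (i : 'I_n) (q : 'I_r) (t : triple n) :
  orthonormal_cols Us -> unit_norm_cols U ->
  (forall (i' : 'I_n) (l : 'I_r), Rabs (U i' l) <= 2 * rownorm Us i') ->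
  0 < m -> 0 < INR n -> 0 < lam -> lam * (12 * (INR n * Sval Us ^ 2 / m)) <= 1/2 ->
  Rabs s <= lam ->
  phat Us m t * exp (s * Yf Us U m i q t true) + (1 - phat Us m t) * exp (s * Yf Us U m i q t false)
  <= exp (vf Us U m lam i q t).
Proof.
move=> HUs HU Hb hm hn hl hK hs.
have hS := Sval_pos q HUs.
case: t => [[i' j] k]; cbv [Yf vf].
case: eqP => [->|_]; last first.
  by rewrite Rmult_0_r exp_0; lra.
set K := INR n * Sval Us ^ 2 / m in hK *.
have hK0 : 0 < K by rewrite /K; apply: Rmult_lt_0_compat; [apply: Rmult_lt_0_compat => //; apply: pow_lt | apply: Rinv_0_lt_compat].
set c := cc Us U q j k.
have hv : 0 <= 2 * lam ^ 2 * (12 * K) * Rabs c.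
  apply: Rmult_le_pos; last exact: Rabs_pos.
  apply: Rmult_le_pos; [have := pow2_ge_0 lam; lra | lra].
have hev : 1 <= exp (2 * lam ^ 2 * (12 * K) * Rabs c) by have := exp_ineq1_le (2 * lam ^ 2 * (12 * K) * Rabs c); lra.
have hc : Rabs c <= 12 * K * (m * pval Us (i, j, k)) by exact: c_bound.
rewrite /Wt /phat.
set P := m * pval Us (i, j, k) in hc *.
have hP0 : 0 <= P by apply: Rmult_le_pos; [lra | exact: pval_ge0].
case: (Rle_lt_dec 1 P) => hP1.
  rewrite Rmin_right //.
  destruct (Rlt_dec _ _) as [hh|hh]; last lra; cbv [is_left].
  rewrite /b2R Rinv_1; have -> : 1 * 1 * c - c = 0 by ring.
  by rewrite Rmult_0_r exp_0; lra.
rewrite Rmin_left; last lra.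
case: (Rle_lt_or_eq_dec _ _ hP0) => hP.
  destruct (Rlt_dec _ _) as [hh|hh]; last lra; cbv [is_left].
  rewrite /b2R.
  apply: (Rle_trans _ _ _ (factor_bound (p := P) (c := c) (lam := s) _ _)).
  - lra.
  - rewrite Rabs_mult.
    have := Rmult_le_compat _ _ _ _ (Rabs_pos s) (Rabs_pos c) hs hc.
    have : lam * (12 * K * P) <= P / 2.
      have -> : lam * (12 * K * P) = (lam * (12 * K)) * P by ring.
      have := Rmult_le_compat_r P _ _ (Rlt_le _ _ hP) hK; lra.
    lra.
  - apply: exp_le.
    have hcP : c ^ 2 / P <= 12 * K * Rabs c.
      apply/(Rmult_le_reg_r P) => //.
      have -> : c ^ 2 / P * P = Rabs c * Rabs c.
        have e : Rabs c * Rabs c = c ^ 2 by rewrite -(pow2_abs c); ring.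
        rewrite e; field; lra.
      have := Rmult_le_compat_l _ _ _ (Rabs_pos c) hc; lra.
    have hs2 : s ^ 2 <= lam ^ 2.
      have -> : s ^ 2 = Rabs s ^ 2 by rewrite pow2_abs.
      have := Rabs_pos s; nra.
    have -> : 2 * s ^ 2 * c ^ 2 / P = 2 * s ^ 2 * (c ^ 2 / P) by field; lra.
    have h1 : 0 <= c ^ 2 / P by apply: Rmult_le_pos; [apply: pow2_ge_0 | apply: Rlt_le; apply: Rinv_0_lt_compat].
    have h2 := pow2_ge_0 s.
    have := Rmult_le_compat _ _ _ _ h2 h1 hs2 hcP.
    lra.
have c0 : c = 0.
  move: hc; rewrite -hP Rmult_0_r => h; move: h (Rabs_pos c); rewrite /Rabs; case: Rcase_abs => ? ? ?; lra.
destruct (Rlt_dec _ _) as [hh|hh]; first lra; cbv [is_left].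
rewrite c0; have -> : forall b, b2R b * 0 * 0 - 0 = 0 by move=> b; ring.
have -> : b2R false * 0 * 0 - 0 = 0 by ring.
rewrite Rmult_0_r exp_0 Rabs_R0 Rmult_0_r exp_0; lra.
Qed.

Lemma sumY n r (Us U : mat n r) (m : R) (i : 'I_n) (q : 'I_r) (d : outcome n) :
  rsum (fun t => Yf Us U m i q t (d t)) = rand_sum Us U m i q d - col_inner U Us q ^ 2.
Proof.
rewrite rsum_triple.
transitivity (rsum (fun i' => if i' == i then rsum (fun j => rsum (fun k =>
   b2R (d (i', j, k)) * Wt Us m (i', j, k) * cc Us U q j k - cc Us U q j k)) else 0)).
  apply: rsum_ext => i'; case: (i' =P i) => [->|ne].
    by apply: rsum_ext => j; apply: rsum_ext => k; cbv [Yf]; rewrite eqxx.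
  rewrite -(rsum0 'I_n); apply: rsum_ext => j.
  rewrite -(rsum0 'I_n); apply: rsum_ext => k.
  by cbv [Yf]; case: (i' =P i).
rewrite rsum_delta.
rewrite (rsum_ext (G := fun j => rsum (fun k => b2R (d (i, j, k)) * Wt Us m (i, j, k) * cc Us U q j k)
   - rsum (fun k => cc Us U q j k))); last by move=> j; rewrite rsum_minus.
rewrite rsum_minus; congr (_ - _).
  rewrite /rand_sum; apply: rsum_ext => j; apply: rsum_ext => k; rewrite /cc.
  have E : forall a b c e f g : R, a * b * (c * e * (f * g)) = a * b * c * e * f * g by move=> *; ring.
  exact: E.
rewrite /col_inner /cc.
rewrite (rsum_ext (G := fun j => U j q * Us j q * rsum (fun k => U k q * Us k q))); last first.
  by move=> j; rewrite rsum_scal.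
by rewrite rsum_scar; ring.
Qed.

Lemma sum_abs_cc n r (Us U : mat n r) (q : 'I_r) :
  orthonormal_cols Us -> unit_norm_cols U ->
  rsum (fun j => rsum (fun k => Rabs (cc Us U q j k))) <= 1.
Proof.
move=> HUs HU.
set a := rsum (fun j => Rabs (U j q * Us j q)).
have -> : rsum (fun j => rsum (fun k => Rabs (cc Us U q j k))) = a * a.
  rewrite /a -rsum_scar; apply: rsum_ext => j; rewrite -rsum_scal; apply: rsum_ext => k.
  by rewrite /cc Rabs_mult Rmult_comm.
have ha0 : 0 <= a by apply: rsum_ge0 => j; exact: Rabs_pos.
have ha : a <= 1.
  have h1 := HU q.
  have h2 := HUs q q; rewrite eqxx in h2.
  apply: (Rle_trans _ (rsum (fun j => (U j q ^ 2 + Us j q * Us j q) / 2))).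
    apply: rsum_le => j; rewrite Rabs_mult.
    have := pow2_abs (U j q); have := pow2_abs (Us j q).
    have := pow2_ge_0 (Rabs (U j q) - Rabs (Us j q)).
    have : Us j q * Us j q = Us j q ^ 2 by ring.
    move=> e1 e2 e3 e4.
    have : (Rabs (U j q) - Rabs (Us j q)) ^ 2 = Rabs (U j q) ^ 2 + Rabs (Us j q) ^ 2 - 2 * (Rabs (U j q) * Rabs (Us j q)) by ring.
    lra.
  rewrite (rsum_ext (G := fun j => / 2 * U j q ^ 2 + / 2 * (Us j q * Us j q))); last by move=> j; field.
  rewrite rsum_plus !rsum_scal h1 h2; lra.
nra.
Qed.
Lemma if_emi_split (P Q : Prop) (w w' : R) : P = Q -> w = w' ->
  (if excluded_middle_informative P then w else 0) = w' - (if excluded_middle_informative Q then 0 else w').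
Proof. move=> <- <-; destruct (excluded_middle_informative P); cbv [is_left]; ring. Qed.

Theorem mainTheorem5 :
  exists C : R, 0 < C /\
  forall (n r : nat) (Us U : mat n r) (m gamma : R) (i : 'I_n) (q : 'I_r),
    orthonormal_cols Us ->
    unit_norm_cols U ->
    (forall (i' : 'I_n) (l : 'I_r), Rabs (U i' l) <= 2 * rownorm Us i') ->
    0 < gamma -> gamma <= 1 ->
    m >= C / gamma ^ 2 * INR n * ln (INR n) * (Sval Us) ^ 2 ->
    Prob Us m (fun d => Rabs (rand_sum Us U m i q d - (col_inner U Us q) ^ 2) <= gamma)
      >= 1 - / (INR n ^ 10).
Proof.
exists 1152; split; first lra.
move=> n r Us U m gamma i q HUs HU Hb hg0 hg1 hm.
have hS := Sval_pos q HUs.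
have hn0 : (0 < n)%N by apply: leq_ltn_trans (ltn_ord i).
have [hn1|hn2] : n = 1%N \/ (2 <= n)%N.
  by case: n i Us U Hb HUs HU hm hS hn0 => [|[|n]] //= *; [left|right].
  subst n.
  have hm0 : 0 <= m by move: hm; rewrite /= ln_1; lra.
  have -> : INR 1 ^ 10 = 1 by simpl; ring.
  rewrite Rinv_1.
  have : 0 <= Prob Us m (fun d => Rabs (rand_sum Us U m i q d - col_inner U Us q ^ 2) <= gamma).
    apply: rsum_ge0 => d; destruct (excluded_middle_informative _) as [h|h].
      by apply: wgt_ge0 => t; apply: phat_bounds.
    cbv [is_left]; lra.
  lra.
have hnR : 2 <= INR n by have := le_INR _ _ (ssrnat.leP hn2); simpl; lra.
have hln : 0 < ln (INR n) by rewrite -ln_1; apply: ln_increasing; lra.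
have hg2 : 0 < gamma ^ 2 by apply: pow_lt.
have hm1 : 0 < 1152 / gamma ^ 2 * INR n * ln (INR n) * Sval Us ^ 2.
  repeat apply: Rmult_lt_0_compat => //; try lra; try (by apply: pow_lt); by apply: Rinv_0_lt_compat.
have hmp : 0 < m by lra.
have hnp : 0 < INR n by lra.
set K := INR n * Sval Us ^ 2 / m.
have hK0 : 0 < K by rewrite /K; apply: Rmult_lt_0_compat; [apply: Rmult_lt_0_compat => //; apply: pow_lt | apply: Rinv_0_lt_compat].
have hKb : K * (1152 * ln (INR n)) <= gamma ^ 2.
  have e : K * (1152 * ln (INR n)) = (1152 / gamma ^ 2 * INR n * ln (INR n) * Sval Us ^ 2) * gamma ^ 2 / m.
    rewrite /K; field; lra.
  rewrite e; apply/(Rmult_le_reg_r m) => //.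
  have -> : 1152 / gamma ^ 2 * INR n * ln (INR n) * Sval Us ^ 2 * gamma ^ 2 / m * m
     = (1152 / gamma ^ 2 * INR n * ln (INR n) * Sval Us ^ 2) * gamma ^ 2 by field; lra.
  rewrite Rmult_comm; apply: Rmult_le_compat_l; lra.
set lam := gamma / (48 * K).
have hl : 0 < lam by rewrite /lam; apply: Rmult_lt_0_compat => //; apply: Rinv_0_lt_compat; lra.
have hlK : lam * (12 * K) <= 1 / 2 by rewrite /lam; field_simplify; lra.
rewrite /Prob.
rewrite (rsum_ext (G := fun d : outcome n => wgt (phat Us m) d -
   (if excluded_middle_informative (Rabs (rsum (fun t => Yf Us U m i q t (d t))) <= gamma)
    then 0 else wgt (phat Us m) d))); last first.
  move=> d; rewrite sumY.
  apply: if_emi_split; reflexivity.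
rewrite rsum_minus wgt_sum.
have T := @tail_bound _ (phat Us m) (Yf Us U m i q) lam gamma (vf Us U m lam i q) hl
   (fun t => phat_bounds Us t (Rlt_le _ _ hmp))
   (fun t => factor_Y (s := lam) i q t HUs HU Hb hmp hnp hl hlK ltac:(rewrite Rabs_right; lra))
   (fun t => factor_Y (s := - lam) i q t HUs HU Hb hmp hnp hl hlK ltac:(rewrite Rabs_Ropp Rabs_right; lra)).
have hv : rsum (vf Us U m lam i q) <= 24 * lam ^ 2 * K.
  rewrite rsum_triple.
  rewrite (rsum_ext (G := fun i' => if i' == i then
     2 * lam ^ 2 * (12 * K) * rsum (fun j => rsum (fun k => Rabs (cc Us U q j k))) else 0)); last first.
    move=> i'; case: (i' =P i) => [->|ne].
      rewrite -rsum_scal; apply: rsum_ext => j; rewrite -rsum_scal; apply: rsum_ext => k.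
      by cbv [vf]; rewrite eqxx.
    rewrite -(rsum0 'I_n); apply: rsum_ext => j.
    rewrite -(rsum0 'I_n); apply: rsum_ext => k.
    by cbv [vf]; case: (i' =P i).
  rewrite rsum_delta.
  have := sum_abs_cc q HUs HU.
  have : 0 <= 2 * lam ^ 2 * (12 * K) by have := pow2_ge_0 lam; nra.
  move=> h1 h2; have := Rmult_le_compat_l _ _ _ h1 h2; lra.
have hexp : - lam * gamma + rsum (vf Us U m lam i q) <= - (12 * ln (INR n)).
  apply: (Rle_trans _ (- lam * gamma + 24 * lam ^ 2 * K)); first lra.
  have -> : - lam * gamma + 24 * lam ^ 2 * K = - (gamma ^ 2 / (96 * K)) by rewrite /lam; field; lra.
  apply: Ropp_le_contravar.
  apply/(Rmult_le_reg_r (96 * K)); first lra.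
  have -> : gamma ^ 2 / (96 * K) * (96 * K) = gamma ^ 2 by field; lra.
  lra.
have hfin : 2 * exp (- (12 * ln (INR n))) <= / INR n ^ 10.
  rewrite exp_Ropp.
  have -> : 12 * ln (INR n) = ln (INR n ^ 12).
    by rewrite ln_pow //; congr (_ * _); simpl; lra.
  rewrite exp_ln; last by apply: pow_lt.
  have hn10 : 0 < INR n ^ 10 by apply: pow_lt.
  have -> : INR n ^ 12 = INR n ^ 10 * INR n ^ 2 by ring.
  rewrite Rinv_mult.
  have : / INR n ^ 2 <= / 4.
    apply: Rinv_le_contravar; first lra. nra.
  have := Rinv_0_lt_compat _ hn10.
  nra.
have := exp_le hexp => hE.
apply: Rle_ge; apply: Rplus_le_compat_l; apply: Ropp_le_contravar.
apply: (Rle_trans _ _ _ T); lra.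
Qed.
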